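(* Let $p\in\mathcal H(3,d)$ with $p(x_1,x_2,x_3)=a(x_1,x_2)+x_3\,b(x_1,x_2)$ for polynomials $a,b$. Suppose two monomials $m_1,m_2$ in the variables $x_1,x_2$ only, both of degree $d$, occur in $p$ and satisfy $\delta(m_1,m_2)\ge 4$. Then $p$ has at least $d+1$ distinct monomials that depend on $x_3$.
   Context: $\mathcal H(3,d)$ is the set of real polynomials in $x_1,x_2,x_3$ of total degree exactly $d$, with all coefficients nonnegative, such that $p(x)=1$ whenever $x_1+x_2+x_3=1$. For monomials $m_1=x_1^{\alpha_1}\cdots x_n^{\alpha_n}$ and $m_2=x_1^{\beta_1}\cdots x_n^{\beta_n}$, $\delta(m_1,m_2)=\sum_j|\alpha_j-\beta_j|$. *)

(* Defs.v *)
From mathcomp Require Import all_boot all_algebra.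
From mathcomp Require Import reals.
From mathcomp Require Import mpoly.
Set Implicit Arguments. Unset Strict Implicit. Unset Printing Implicit Defensive.
Import GRing.Theory Num.Theory.
Local Open Scope ring_scope.

Definition ix1 : 'I_3 := @Ordinal 3 0 isT.
Definition ix2 : 'I_3 := @Ordinal 3 1 isT.
Definition ix3 : 'I_3 := @Ordinal 3 2 isT.

(* H(3,d): real polynomials in x1,x2,x3 of total degree exactly d,
   nonnegative coefficients, and p(x) = 1 whenever x1+x2+x3 = 1. *)
Definition inH3 (R : realType) (d : nat) (p : {mpoly R[3]}) : Prop :=
  [/\ msize p = d.+1,
      (forall m : 'X_{1..3}, 0 <= p@_m) &
      (forall x : 'I_3 -> R, x ix1 + x ix2 + x ix3 = 1 -> p.@[x] = 1)].

Definition mdelta (n : nat) (m1 m2 : 'X_{1..n}) : nat :=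
  (\sum_(j < n) ((m1 j - m2 j) + (m2 j - m1 j)))%N.

(* Main.v *)
Require Import Defs.
From mathcomp Require Import all_boot all_algebra.
From mathcomp Require Import reals.
From mathcomp Require Import mpoly.
From mathcomp Require Import zify ring lra.
Set Implicit Arguments. Unset Strict Implicit. Unset Printing Implicit Defensive.
Import GRing.Theory Num.Theory.
Local Open Scope ring_scope.

Section Ident.
Variable R : realType.

Lemma poly_allroots0 (P : {poly R}) : (forall t, P.[t] = 0) -> P = 0.
Proof.
move=> h; apply: (@roots_geq_poly_eq0 _ P [seq i%:R | i <- iota 0 (size P)]).
- by apply/allP=> x _; apply/rootP; apply: h.
- rewrite map_inj_uniq ?iota_uniq //; by move=> a b /eqP; rewrite eqr_nat => /eqP.
- by rewrite size_map size_iota.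
Qed.

Lemma mcoeff_supp_sum n (p : {mpoly R[n]}) (G : 'X_{1..n} -> R) t :
  (forall m, m \notin msupp p -> G m = 0) ->
  \sum_(m <- msupp p) G m * (m == t)%:R = G t.
Proof.
move=> hG; case: (boolP (t \in msupp p)) => ht.
  rewrite (bigD1_seq t) //= ?msupp_uniq // eqxx mulr1 big1 ?addr0 // => m /negbTE ->.
  by rewrite mulr0.
rewrite big_seq big1 ?hG // => m hm; case: eqP hm => [->|_ _]; last by rewrite mulr0.
by rewrite (negbTE ht).
Qed.

Lemma meval_muni n (q : {mpoly R[n.+1]}) v :
  q.@[v] = (map_poly (meval (fun i : 'I_n => v (widen_ord (leqnSn n) i))) (muni q)).[v ord_max].
Proof.
rewrite muniE mevalE raddf_sum horner_sum /=; apply: eq_bigr => m _.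
rewrite map_polyZ map_polyXn hornerZ hornerXn /= mevalZ mevalX big_ord_recr /=.
rewrite mulrA; congr (_ * _ * _); apply: eq_bigr => i _; by rewrite mnmE.
Qed.

End Ident.
Section Ident2.
Variable R : realType.

Lemma coef_muni n (q : {mpoly R[n.+1]}) (m : 'X_{1..n.+1}) :
  ((muni q)`_(m ord_max))@_([multinom m (widen_ord (leqnSn n) i) | i < n]) = q@_m.
Proof.
rewrite muniE coef_sum raddf_sum /=.
rewrite -(@mcoeff_supp_sum _ _ q (fun k => q@_k)); last by move=> k /memN_msupp_eq0.
apply: eq_bigr => k _; rewrite coefZ coefXn.
set mr := fun mm : 'X_{1..n.+1} => [multinom mm (widen_ord (leqnSn n) i) | i < n].
have key : (k == m) = (mr k == mr m) && (m ord_max == k ord_max).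
  apply/eqP/andP => [->|[/eqP e /eqP e2]]; first by [].
  apply/mnmP => i; case: (unliftP ord_max i) => [j ->|->]; last by [].
  have := congr1 (fun mm : 'X_{1..n} => mm j) e; rewrite /mr !mnmE.
  have -> : lift ord_max j = widen_ord (leqnSn n) j by apply: val_inj; rewrite /= /bump leqNgt ltn_ord.
  by [].
rewrite key; case: eqP => _; rewrite ?andbF ?mulr0 ?mcoeff0 ?mulr1 ?andbT ?mcoeffZ ?mcoeffX //.

Qed.

Lemma mpoly_eval0 n (q : {mpoly R[n]}) : (forall v, q.@[v] = 0) -> q = 0.
Proof.
elim: n q => [|n IH] q h.
  have e : q = (q@_0%MM)%:MP.
    by apply/mpolyP => m; rewrite mcoeffC nvar0_mnmE eqxx mulr1.
  by have := h (fun _ => 0); rewrite e mevalC => ->.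
apply/mpolyP => m; rewrite mcoeff0 -coef_muni.
suff -> : (muni q)`_(m ord_max) = 0 by rewrite mcoeff0.
apply: IH => w; rewrite -coef_map /=.
suff -> : map_poly (meval w) (muni q) = 0 by rewrite coef0.
apply: poly_allroots0 => t.
pose v := fun i : 'I_n.+1 => if insub (val i) is Some j then w j else t.
have := h v; rewrite meval_muni.
have -> : v ord_max = t by rewrite /v insubN //= ltnn.
rewrite (@eq_map_poly _ _ _ (meval w)) //.
move=> x; apply: meval_eq => i; rewrite /v insubT /= ?ltn_ord // => ?.
by f_equal; apply: val_inj.
Qed.
End Ident2.


Lemma mnm3P (m m' : 'X_{1..3}) :
  m ix1 = m' ix1 -> m ix2 = m' ix2 -> m ix3 = m' ix3 -> m = m'.
Proof.
move=> h1 h2 h3; apply/mnmP => -[[|[|[|i]]] hi] //.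
- by rewrite (_ : Ordinal hi = ix1) //; apply: val_inj.
- by rewrite (_ : Ordinal hi = ix2) //; apply: val_inj.
- by rewrite (_ : Ordinal hi = ix3) //; apply: val_inj.
Qed.

Lemma mnmU (i j : 'I_3) : U_(i)%MM j = (i == j) :> nat.
Proof. by rewrite mnm1E. Qed.

Section Main.
Variable R : realType.
Variable p : {mpoly R[3]}.
Hypothesis hsupp : forall m, m \in msupp p -> (m ix3 <= 1)%N.

Definition Bq : {mpoly R[3]} :=
  \sum_(m <- msupp p) (if m ix3 == 1%N then p@_m else 0) *: 'X_[m - U_(ix3)].

Lemma coefB k : Bq@_k = if k ix3 == 0%N then p@_(k + U_(ix3))%MM else 0.
Proof.
rewrite /Bq raddf_sum /=.
rewrite -(@mcoeff_supp_sum _ _ p (fun m => if k ix3 == 0%N then p@_m else 0) (k + U_(ix3))%MM);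
  last by move=> m /memN_msupp_eq0 ->; case: ifP.
apply: eq_bigr => m _; rewrite mcoeffZ mcoeffX.
case: (eqVneq m (k + U_(ix3))%MM%MM) => [->|ne].
  rewrite addmK eqxx mulr1 mnmDE mnmU (eqxx ix3) addn1 eqSS.
  by rewrite mulr1.
rewrite mulr0; case: ifP => m3; last by rewrite mul0r.
case: eqP => e; rewrite ?mulr0 // mulr1.
move/eqP: m3 => m3.
by case/eqP: ne; rewrite -e; apply: mnm3P; rewrite !mnmDE !mnmBE !mnmU //=; lia.
Qed.


Lemma coefXM (r : {mpoly R[3]}) (i : 'I_3) (k : 'X_{1..3}) :
  ('X_i * r)@_k = if (0 < k i)%N then r@_(k - U_(i))%MM else 0.
Proof.
case: ifP => hk.
  rewrite mulrC -{1}(@submK _ U_(i)%MM k); last first.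
    by apply/mnm_lepP => j; rewrite mnmU; case: eqP => [<-|] //=; lia.
  by rewrite addmC mcoeffMX.
apply: memN_msupp_eq0; rewrite mulrC (perm_mem (msuppMX _ _)).
by apply/mapP => -[m' _ e]; move: hk; rewrite e mnmDE mnmU eqxx /=; lia.
Qed.

Definition q : {mpoly R[3]} :=
  p - 'X_ix3 * Bq + Bq - 'X_ix1 * Bq - 'X_ix2 * Bq - 1.

Lemma coefq k : q@_k = p@_k - ('X_ix3 * Bq)@_k + Bq@_k - ('X_ix1 * Bq)@_k
  - ('X_ix2 * Bq)@_k - (k == 0%MM)%:R.
Proof. by rewrite /q !(mcoeffB, mcoeffD) mcoeffN mcoeff1. Qed.

Lemma qsupp (k : 'X_{1..3}) : (0 < k ix3)%N -> q@_k = 0.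
Proof.
move=> hk; rewrite coefq !coefXM !coefB hk !mnmBE !mnmU /= subn0.
have -> : (k ix3 == 0%N) = false by rewrite eqn0Ngt hk.
have -> : (k == 0%MM) = false.
  by apply/negbTE/eqP => e; move: hk; rewrite e mnm0E.
rewrite !if_same.
case: (eqVneq (k ix3) 1%N) => e.
  rewrite e /= submK; last by apply/mnm_lepP => j; rewrite mnmU; case: eqP => [<-|] //=; lia.
  by rewrite !subr0 addr0 subrr.
have -> : (k ix3 - 1 == 0)%N = false by apply/negbTE; move: e hk; clear; lia.
rewrite memN_msupp_eq0 ?subr0 ?addr0 ?subrr //.
by apply/negP => /hsupp; move: e hk; clear; lia.
Qed.


Lemma ord3_cases (P : 'I_3 -> Prop) : P ix1 -> P ix2 -> P ix3 -> forall i, P i.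
Proof.
move=> h1 h2 h3 -[[|[|[|i]]] hi] //.
- by rewrite (_ : Ordinal hi = ix1) //; apply: val_inj.
- by rewrite (_ : Ordinal hi = ix2) //; apply: val_inj.
- by rewrite (_ : Ordinal hi = ix3) //; apply: val_inj.
Qed.

Lemma meval_no3 (r : {mpoly R[3]}) (v v' : 'I_3 -> R) :
  (forall k : 'X_{1..3}, (0 < k ix3)%N -> r@_k = 0) ->
  v ix1 = v' ix1 -> v ix2 = v' ix2 -> r.@[v] = r.@[v'].
Proof.
move=> hr e1 e2; rewrite !mevalE; apply: eq_big_seq => k hk; congr (_ * _).
have k3 : k ix3 = 0%N.
  case: (posnP (k ix3)) => // /hr h; by move: hk; rewrite mcoeff_msupp h eqxx.
apply: eq_bigr => i _; move: i; apply: ord3_cases; by rewrite ?e1 ?e2 ?k3.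
Qed.

Hypothesis hH : forall x : 'I_3 -> R, x ix1 + x ix2 + x ix3 = 1 -> p.@[x] = 1.

Lemma q_eval0 (v : 'I_3 -> R) : q.@[v] = 0.
Proof.
pose v' := fun i : 'I_3 => if i == ix3 then 1 - v ix1 - v ix2 else v i.
have e1 : v' ix1 = v ix1 by [].
have e2 : v' ix2 = v ix2 by [].
have e3 : v' ix3 = 1 - v ix1 - v ix2 by [].
rewrite (@meval_no3 q v v') ?e1 ?e2 //; last exact: qsupp.
rewrite /q !(mevalB, mevalD, mevalM) !mevalXU mevalN meval1 hH e1 e2 e3; last first.
  by rewrite ?e1 ?e2 ?e3; ring.
ring.
Qed.

Lemma q_eq0 : q = 0.
Proof. exact: mpoly_eval0 q_eval0. Qed.

Lemma relq (k : 'X_{1..3}) : k ix3 = 0%N -> k != 0%MM ->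
  p@_k + p@_(k + U_(ix3))%MM =
  (if (0 < k ix1)%N then p@_(k - U_(ix1) + U_(ix3))%MM else 0) +
  (if (0 < k ix2)%N then p@_(k - U_(ix2) + U_(ix3))%MM else 0).
Proof.
move=> k3 k0; have := coefq k; rewrite q_eq0 mcoeff0 !coefXM !coefB !mnmBE !mnmU /= k3 /= (negbTE k0).
rewrite /= !subr0.
case: ifP => _; case: ifP => _ h; lra.
Qed.

End Main.

Lemma sum3 (F : 'I_3 -> nat) : (\sum_(j < 3) F j)%N = (F ix1 + F ix2 + F ix3)%N.
Proof.
rewrite !big_ord_recl big_ord0 addn0 addnA.
congr (F _ + F _ + F _)%N; exact: val_inj.
Qed.

Lemma mdeg3 (m : 'X_{1..3}) : mdeg m = (m ix1 + m ix2 + m ix3)%N.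
Proof. by rewrite mdegE sum3. Qed.

Section Main2.
Variable R : realType.
Variable p : {mpoly R[3]}.
Hypothesis hsupp : forall m, m \in msupp p -> (m ix3 <= 1)%N.
Hypothesis hH : forall x : 'I_3 -> R, x ix1 + x ix2 + x ix3 = 1 -> p.@[x] = 1.
Hypothesis hnn : forall m, 0 <= p@_m.

Definition good (j : nat) := exists m : 'X_{1..3}, [/\ m ix3 = 1%N, mdeg m = j.+1 & 0 < p@_m].

Lemma descent j : good j.+1 -> good j.
Proof.
case=> m [m3 md pm].
set k := (m - U_(ix3))%MM.
have k3 : k ix3 = 0%N by rewrite mnmBE mnmU m3.
have km : (k + U_(ix3))%MM = m.
  by apply: mnm3P; rewrite !mnmDE !mnmBE !mnmU /=; lia.
clearbody k.
have k0 : k != 0%MM.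
  apply/eqP => e; move: md; rewrite mdeg3 -km e !mnmDE !mnmU !mnm0E /=; lia.
have := relq hsupp hH k3 k0; rewrite km.
have kd : (k ix1 + k ix2 = j.+1)%N by move: md; rewrite mdeg3 -km !mnmDE !mnmU /=; lia.
have := hnn k.
case: ifP => h1; case: ifP => h2 hk e.
- case: (ltrP 0 (p@_(k - U_(ix1) + U_(ix3))%MM)) => c.
    exists (k - U_(ix1) + U_(ix3))%MM; split => //.
      by rewrite !mnmDE !mnmBE !mnmU /=; lia.
    by rewrite mdeg3 !mnmDE !mnmBE !mnmU /=; lia.
  exists (k - U_(ix2) + U_(ix3))%MM; split => //.
      by rewrite !mnmDE !mnmBE !mnmU /=; lia.
    by rewrite mdeg3 !mnmDE !mnmBE !mnmU /=; lia.
  lra.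
- exists (k - U_(ix1) + U_(ix3))%MM; split => //.
    by rewrite !mnmDE !mnmBE !mnmU /=; lia.
    by rewrite mdeg3 !mnmDE !mnmBE !mnmU /=; lia.
  lra.
- exists (k - U_(ix2) + U_(ix3))%MM; split => //.
    by rewrite !mnmDE !mnmBE !mnmU /=; lia.
    by rewrite mdeg3 !mnmDE !mnmBE !mnmU /=; lia.
  lra.
- by clear h1 h2 kd k3 md m3; lra.
Qed.

Lemma topm (d : nat) (m1 : 'X_{1..3}) : msize p = d.+1 -> m1 \in msupp p ->
  m1 ix3 = 0%N -> mdeg m1 = d -> m1 != 0%MM ->
  exists i, [/\ i = ix1 \/ i = ix2, (0 < m1 i)%N & 0 < p@_(m1 - U_(i) + U_(ix3))%MM].
Proof.
move=> hs hm m3 md m0.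
have := relq hsupp hH m3 m0.
have -> : p@_(m1 + U_(ix3))%MM = 0.
  apply: memN_msupp_eq0; apply: msize_mdeg_ge; rewrite mdegD mdeg1 md hs; lia.
have pm : 0 < p@_m1 by rewrite lt0r hnn andbT -mcoeff_msupp.
case: ifP => h1; case: ifP => h2 e.
- case: (ltrP 0 (p@_(m1 - U_(ix1) + U_(ix3))%MM)) => c.
    by exists ix1; split => //; left.
  exists ix2; split => //; first by right.
  have := hnn (m1 - U_(ix1) + U_(ix3))%MM; clear h1 h2; lra.
- by exists ix1; split => //; [left | clear h1 h2; lra].
- by exists ix2; split => //; [right | clear h1 h2; lra].
- by move: pm; rewrite -[p@_m1]addr0 e addr0 lt0r eqxx.
Qed.

End Main2.

Lemma distinct (m1 m2 : 'X_{1..3}) (i k : 'I_3) :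
  (i = ix1 \/ i = ix2) -> (k = ix1 \/ k = ix2) -> (0 < m1 i)%N -> (0 < m2 k)%N ->
  m1 ix3 = 0%N -> m2 ix3 = 0%N -> (4 <= mdelta m1 m2)%N ->
  (m1 - U_(i) + U_(ix3))%MM != (m2 - U_(k) + U_(ix3))%MM.
Proof.
move=> hi hk p1 p2 a3 b3 hd; apply/eqP => e.
have c1 := congr1 (fun m : 'X_{1..3} => m ix1) e.
have c2 := congr1 (fun m : 'X_{1..3} => m ix2) e.
move: c1 c2 hd; rewrite /mdelta sum3 /= !mnmDE !mnmBE !mnmU a3 b3.
clear e.
case: hi hk p1 p2 => -> [] -> /=.

all: move=> *; lia.
Qed.

Lemma count_levels (T : eqType) (f : T -> nat) (s : seq T) K :
  (\sum_(j < K) count (fun x => f x == j.+1) s <= size s)%N.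
Proof.
elim: s => [|x s IH] /=; first by rewrite big1.
rewrite big_split /= -add1n; apply: leq_add => //.
clear IH; elim: K => [|K IHK]; first by rewrite big_ord0.
rewrite big_ord_recr /=; case: eqP => e; last by rewrite addn0.
rewrite big1 // => j _; rewrite e eqSS; case: eqP => // ej.
by move: (ltn_ord j) ej; lia.
Qed.

Lemma count2 (T : eqType) (P : pred T) (s : seq T) u v : uniq s -> u != v ->
  u \in s -> v \in s -> P u -> P v -> (2 <= count P s)%N.
Proof.
move=> us uv hu hv pu pv; rewrite -size_filter.
have -> : 2%N = size [:: u; v] by [].
apply: uniq_leq_size; first by rewrite /= inE uv.
by move=> x; rewrite !inE => /orP[] /eqP ->; rewrite mem_filter ?pu ?pv.
Qed.


Theorem lemma8 (R : realType) (d : nat) (p : {mpoly R[3]})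
  (m1 m2 : 'X_{1..3}) :
  inH3 d p ->
  (forall m, m \in msupp p -> (m ix3 <= 1)%N) ->
  m1 \in msupp p -> m2 \in msupp p ->
  m1 ix3 = 0%N -> m2 ix3 = 0%N ->
  mdeg m1 = d -> mdeg m2 = d ->
  (4 <= mdelta m1 m2)%N ->
  (d.+1 <= size [seq m : 'X_{1..3} <- msupp p | (0 < m ix3)%N])%N.
Proof.
move=> [hs hnn hH] hsupp hm1 hm2 a3 b3 d1 d2 hd.
case: d hs d1 d2 => [|d'] hs d1 d2.
  by move: hd d1 d2; rewrite /mdelta sum3 !mdeg3 a3 b3; lia.
have nz1 : m1 != 0%MM by apply/eqP => e; move: d1; rewrite e mdeg0.
have nz2 : m2 != 0%MM by apply/eqP => e; move: d2; rewrite e mdeg0.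
have [i [hi p1 pu]] := topm hsupp hH hnn hs hm1 a3 d1 nz1.
have [k [hk p2 pv]] := topm hsupp hH hnn hs hm2 b3 d2 nz2.
set u := (m1 - U_(i) + U_(ix3))%MM in pu *.
set v := (m2 - U_(k) + U_(ix3))%MM in pv *.
have uv : u != v by apply: distinct.
have u3 : u ix3 = 1%N by rewrite /u !mnmDE !mnmBE !mnmU a3; case: hi => ->.
have v3 : v ix3 = 1%N by rewrite /v !mnmDE !mnmBE !mnmU b3; case: hk => ->.
have ud : mdeg u = d'.+1.
  by move: d1; rewrite /u !mdeg3 !mnmDE !mnmBE !mnmU a3; case: hi p1 => -> /=; lia.
have vd : mdeg v = d'.+1.
  by move: d2; rewrite /v !mdeg3 !mnmDE !mnmBE !mnmU b3; case: hk p2 => -> /=; lia.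
clearbody u v.
have G : forall t j, (j + t)%N = d' -> good p j.
  elim => [|t IH] j e.
    by exists u; split => //; rewrite ud -e addn0.
  apply: descent hsupp hH hnn _ _; apply: IH; lia.
set s := [seq m : 'X_{1..3} <- msupp p | (0 < m ix3)%N].
have ins (m : 'X_{1..3}) : m ix3 = 1%N -> 0 < p@_m -> m \in s.
  move=> m3 pm; rewrite mem_filter m3 /= mcoeff_msupp.
  by move: pm; rewrite lt0r => /andP[].
apply: leq_trans (count_levels mdeg s d'.+1).
rewrite big_ord_recr /=.
have c2 : (2 <= count (fun x => mdeg x == d'.+1) s)%N.
  apply: (count2 (u := u) (v := v)) => //; rewrite ?ud ?vd ?ins //.
  by rewrite filter_uniq // msupp_uniq.
have c1 : (d' <= \sum_(j < d') count (fun x => mdeg x == j.+1) s)%N.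
  apply: (@leq_trans (\sum_(j < d') 1)%N); first by rewrite sum_nat_const card_ord muln1.
  apply: leq_sum => j _; rewrite -has_count; apply/hasP.
  have [m [m3 md pm]] := G (d' - j)%N j (subnKC (ltnW (ltn_ord j))).
  by exists m; [apply: ins | rewrite md].
apply: (@leq_trans (d' + 2)%N); first lia.
exact: leq_add.
Qed.
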